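(* Let $r>5$ with $r\not\equiv 0\pmod 3$, and let $C_r$ be the directed cycle of length $r$. Then $3\leq\chi^*_o(C_r)\leq 4$.
   Context: The directed cycle $C_r$ has vertices $u_i$, $i\in\mathbb{Z}/r\mathbb{Z}$, and arcs $u_iu_{i+1}$. For a set $S$ of $k$ colors, a $b$-fold oriented $k$-coloring of an oriented graph $G$ is a map $f$ from $V(G)$ to the $b$-element subsets of $S$ such that (i) $f(x)\cap f(y)=\emptyset$ for every arc $xy$, and (ii) for all arcs $xy, zw$, $f(x)\cap f(w)\neq\emptyset$ implies $f(y)\cap f(z)=\emptyset$. $\chi^b_o(G)$ is the minimum such $k$, and $\chi^*_o(G)=\lim_{b\to\infty}\chi^b_o(G)/b=\inf_{b\ge1}\chi^b_o(G)/b$. *)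

(* Defs.v *)
From HB Require Import structures.
From mathcomp Require Import all_boot all_order all_algebra.
From mathcomp Require Import classical_sets reals.
Set Implicit Arguments. Unset Strict Implicit. Unset Printing Implicit Defensive.
Import Order.TTheory GRing.Theory Num.Theory.

Local Open Scope ring_scope.

Definition is_bfold_oriented_coloring (T : finType) (arc : rel T)
    (b k : nat) (f : T -> {set 'I_k}) : Prop :=
  (forall x, #|f x| = b) /\
  (forall x y, arc x y -> (f x :&: f y == finset.set0)) /\
  (forall x y z w, arc x y -> arc z w ->
      (f x :&: f w != finset.set0) -> (f y :&: f z == finset.set0)).

Definition chi_o_b (R : realType) (T : finType) (arc : rel T) (b : nat) : R :=
  inf [set (k%:R : R) | k in [set k : nat |
         exists f : T -> {set 'I_k}, @is_bfold_oriented_coloring T arc b k f]]%classic.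

Definition chi_o_frac (R : realType) (T : finType) (arc : rel T) : R :=
  inf [set chi_o_b R arc b / b%:R | b in [set b : nat | (1 <= b)%N]]%classic.

Definition dcycle_arc (r : nat) : rel 'I_r :=
  fun x y => nat_of_ord y == (x.+1 %% r)%N.

(* Main.v *)
Require Import Defs.
From HB Require Import structures.
From mathcomp Require Import all_boot all_order all_algebra.
From mathcomp Require Import classical_sets reals.
From mathcomp Require Import zify.
Import Order.TTheory GRing.Theory Num.Theory.
Local Open Scope ring_scope.

Definition col (r i : nat) : nat :=
  let s := (r - 4 * (r %% 3))%N in if (i < s)%N then (i %% 3)%N else ((i - s) %% 4)%N.
Definition ep (a b : nat) : Prop :=
  (a = 0 /\ b = 1) \/ (a = 1 /\ b = 2) \/ (a = 2 /\ b = 0) \/ (a = 2 /\ b = 3) \/ (a = 3 /\ b = 0).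
Definition e (a b : nat) : bool :=
  [|| (a == 0%N) && (b == 1%N), (a == 1%N) && (b == 2%N), (a == 2%N) && (b == 0%N),
      (a == 2%N) && (b == 3%N) | (a == 3%N) && (b == 0%N)].

Lemma col_arc r x : (5 < r)%N -> (r %% 3 != 0)%N -> (x < r)%N ->
  ep (col r x) (col r ((x.+1) %% r)).
Proof.
move=> h5 h3 hx; rewrite /ep /col.
have [E|ne] := eqVneq x.+1 r.
  rewrite E modnn; case: ifP; case: ifP; lia.
have -> : (x.+1 %% r = x.+1)%N by rewrite modn_small; lia.
case: ifP; case: ifP; lia.
Qed.

Lemma col_lt r x : (col r x < 4)%N.
Proof. rewrite /col; case: ifP; lia. Qed.

Lemma ep_e a b : ep a b -> e a b.
Proof. by rewrite /ep /e; lia. Qed.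

Lemma e_irr a : e a a = false.
Proof. rewrite /e; lia. Qed.

Lemma e_anti a b : e a b -> e b a -> False.
Proof. rewrite /e; lia. Qed.

Section Blow.
Variables (T : finType) (arc : rel T) (n : nat) (c : T -> 'I_n) (E : rel 'I_n).
Hypothesis Eirr : forall a, ~~ E a a.
Hypothesis Eanti : forall a b, E a b -> E b a -> False.
Hypothesis hom : forall x y, arc x y -> E (c x) (c y).

Lemma blowup b : exists f : T -> {set 'I_(#|{: 'I_n * 'I_b}|)},
  is_bfold_oriented_coloring arc b f.
Proof.
pose f x := [set enum_rank (c x, j) | j : 'I_b].
have key x y : f x :&: f y != finset.set0 -> c x = c y.
  case/set0Pn => i; rewrite inE => /andP[/imsetP[j _ ->] /imsetP[j' _]].
  by move/enum_rank_inj => [].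
exists f; split; [|split].
- move=> x; rewrite card_imset ?card_ord //.
  by move=> j j' /enum_rank_inj [].
- move=> x y axy; apply/negPn/negP => /key hc.
  by have := Eirr (c x); rewrite {2}hc hom.
- move=> x y z w axy azw /key hxw; apply/negPn/negP => /key hyz.
  have := hom _ _ azw; rewrite -hxw -hyz => h.
  exact: (Eanti _ _ (hom _ _ axy) h).
Qed.
End Blow.

Lemma lower (r b k : nat) (f : 'I_r -> {set 'I_k}) : (2 < r)%N -> (1 <= b)%N ->
  is_bfold_oriented_coloring (@dcycle_arc r) b f -> (3 * b <= k)%N.
Proof.
move=> hr hb [hc [h1 h2]].
have r0 : (0 < r)%N by lia.
have r1 : (1 < r)%N by lia.
pose u0 := Ordinal r0; pose u1 := Ordinal r1; pose u2 := Ordinal hr.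
have a01 : dcycle_arc u0 u1 by rewrite /dcycle_arc /= modn_small.
have a12 : dcycle_arc u1 u2 by rewrite /dcycle_arc /= modn_small.
have dAB := h1 _ _ a01; have dBC := h1 _ _ a12.
have dAC : f u0 :&: f u2 == finset.set0.
  apply/negPn/negP => /(h2 _ _ _ _ a01 a12); rewrite finset.setIid => /eqP B0.
  by move: (hc u1); rewrite B0 cards0; lia.
have := max_card (mem (f u0 :|: f u1 :|: f u2)); rewrite card_ord.
rewrite cardsU cardsU finset.setIUl (eqP dAB) (eqP dBC) (eqP dAC) finset.setU0 cards0 !hc.
lia.
Qed.

Theorem lemma1 (R : realType) (r : nat) :
  (5 < r)%N -> (r %% 3 != 0)%N ->
  3 <= chi_o_frac R (@dcycle_arc r) <= 4.
Proof.
move=> h5 h3.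
pose c (i : 'I_r) : 'I_4 := inord (col r i).
have cE i : nat_of_ord (c i) = col r i by rewrite inordK // col_lt.
pose E (a b : 'I_4) := e a b.
have Eirr a : ~~ E a a by rewrite /E e_irr.
have Eanti a b : E a b -> E b a -> False by apply: e_anti.
have hom x y : dcycle_arc x y -> E (c x) (c y).
  rewrite /dcycle_arc /E !cE => /eqP ->; apply: ep_e; apply: col_arc => //.
have ex b := @blowup _ _ _ c E Eirr Eanti hom b.
have step1 b : (1 <= b)%N -> 3 <= chi_o_b R (@dcycle_arc r) b / b%:R.
  move=> hb; rewrite ler_pdivlMr ?ltr0n //.
  have -> : 3 * b%:R = ((3 * b)%N%:R : R) by rewrite natrM.
  apply: lb_le_inf.
    have [f hf] := ex b; exists (#|{: 'I_4 * 'I_b}|%:R); exists #|{: 'I_4 * 'I_b}| => //.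
  move=> y [k [f hf] <-]; rewrite ler_nat; apply: (@lower r b k f) => //; lia.
apply/andP; split.
  apply: lb_le_inf; first by exists (chi_o_b R (@dcycle_arc r) 1 / 1%:R); exists 1%N.
  by move=> y [b hb <-]; apply: step1.
apply: le_trans (_ : chi_o_b R (@dcycle_arc r) 1 / 1%:R <= 4).
  apply: ge_inf; last by exists 1%N.
  by exists 3 => y [b hb <-]; apply: step1.
rewrite divr1; apply: ge_inf.
  by exists 0 => y [k _ <-]; rewrite ler0n.
have [f hf] := ex 1%N; exists #|{: 'I_4 * 'I_1}|; first by exists f.
by rewrite card_prod !card_ord.
Qed.
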